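(* For any two polytopes $P,Q\subseteq\mathbb{R}^n$ we have $\mathrm{Sh}(P+Q)=\mathrm{Sh}(P)+\mathrm{Sh}(Q)$. Consequently $P\mapsto\mathrm{Sh}(P)$ induces a group homomorphism $\mathrm{Sh}:\mathcal{P}(\mathbb{R}^n)\to\mathcal{P}(\mathbb{R}^n)$.
   Context: Polytopes are convex hulls of nonempty finite sets; $P+Q$ is the Minkowski sum and $\mathcal{P}(\mathbb{R}^n)$ the Grothendieck group of polytopes. For $S\subseteq\mathbb{R}^n$, $\mathrm{hull}(S)$ is its convex hull and $h(S)=\min\{x_n: x\in S\}$ its height. For $t\in\mathbb{R}$, $c_t:\mathbb{R}^n\to\mathbb{R}^n$, $(x_1,\dots,x_n)\mapsto(x_1,\dots,x_{n-1},t)$. The shadow of a polytope $P$ is $\mathrm{Sh}(P)=\mathrm{hull}(P\cup c_{h(P)}(P))$. *)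

(* Defs.v *)
(* R is an arbitrary real field; points of R^(n+1) are 'rV[R]_n.+1. *)
From HB Require Import structures.
From mathcomp Require Import all_boot all_order all_algebra.
Set Implicit Arguments. Unset Strict Implicit. Unset Printing Implicit Defensive.
Import Order.TTheory GRing.Theory Num.Theory.
Local Open Scope ring_scope.

Section Defs.
Variables (R : realFieldType) (n : nat).
Notation V := 'rV[R]_n.+1.

Definition pset := V -> Prop.

Definition set_eq (A B : pset) : Prop := forall x, A x <-> B x.

Definition hull (S : pset) : pset := fun x =>
  exists (m : nat) (p : 'I_m -> V) (w : 'I_m -> R),
    (forall i, S (p i)) /\ (forall i, 0 <= w i) /\
    \sum_(i < m) w i = 1 /\ x = \sum_(i < m) w i *: p i.

Definition is_polytope (P : pset) : Prop :=
  exists s : seq V, s != [::] /\ set_eq P (hull (fun x => x \in s)).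

Definition msum (P Q : pset) : pset := fun x =>
  exists p q, P p /\ Q q /\ x = p + q.

Definition lastc (x : V) : R := x 0 ord_max.

Definition is_height (S : pset) (t : R) : Prop :=
  (exists x, S x /\ lastc x = t) /\ (forall x, S x -> t <= lastc x).

Definition ct (t : R) (x : V) : V :=
  \row_(i < n.+1) (if i == ord_max then t else x 0 i).

Definition pimage (f : V -> V) (S : pset) : pset := fun y => exists x, S x /\ y = f x.
Definition punion (A B : pset) : pset := fun x => A x \/ B x.

Definition Sh (P : pset) : pset := fun x =>
  exists t, is_height P t /\ hull (punion P (pimage (ct t) P)) x.

End Defs.

(* Main.v *)
Require Import Defs.
From HB Require Import structures.
From mathcomp Require Import all_boot all_order all_algebra ring.
Import Order.TTheory GRing.Theory Num.Theory.
Local Open Scope ring_scope.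

Section H.
Variables (R : realFieldType) (n : nat).
Notation V := 'rV[R]_n.+1.
Implicit Types (S C P Q A B : pset R n).

Definition bconv C := forall x y (l : R), C x -> C y -> 0 <= l -> l <= 1 ->
  C (l *: x + (1 - l) *: y).

Lemma hull_mono S T : (forall x, S x -> T x) -> forall x, hull S x -> hull T x.
Proof. by move=> ST x [m [p [w [Sp [w0 [w1 ->]]]]]]; exists m, p, w; split=> // i; apply: ST. Qed.

Lemma hull_sub S x : S x -> hull S x.
Proof.
move=> Sx; exists 1%N, (fun _ => x), (fun _ => 1); split=> //; split=> //.
by rewrite !big_ord1 scale1r.
Qed.

Lemma split_l m1 m2 (i : 'I_m1) : split (lshift m2 i) = inl i.
Proof. exact: (@unsplitK m1 m2 (inl i)). Qed.
Lemma split_r m1 m2 (i : 'I_m2) : split (rshift m1 i) = inr i.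
Proof. exact: (@unsplitK m1 m2 (inr i)). Qed.

Lemma hull_bconv S : bconv (hull S).
Proof.
move=> x y l [m1 [p [a [Sp [a0 [a1 ->]]]]]] [m2 [q [b [Sq [b0 [b1 ->]]]]]] l0 l1.
exists (m1 + m2)%N.
exists (fun k => match split k with inl i => p i | inr j => q j end).
exists (fun k => match split k with inl i => l * a i | inr j => (1 - l) * b j end).
split; first by move=> k; case: (split k).
split; first by move=> k; case: (split k) => i; apply: mulr_ge0; rewrite ?subr_ge0.
rewrite !big_split_ord /=.
under eq_bigr do rewrite split_l.
under [X in _ + X = _]eq_bigr do rewrite split_r.
split; first by rewrite -!mulr_sumr a1 b1 !mulr1 addrC subrK.
under [in RHS]eq_bigr do rewrite split_l.
under [X in _ = _ + X]eq_bigr do rewrite split_r.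
by rewrite !scaler_sumr; congr (_ + _); apply: eq_bigr => i _; rewrite scalerA.
Qed.

Lemma hull_min S C : bconv C -> (forall x, S x -> C x) -> forall x, hull S x -> C x.
Proof.
move=> cC SC x [m [p [w [Sp [w0 [w1 ->]]]]]].
elim: m p w Sp w0 w1 => [|m IH] p w Sp w0 w1.
  by move: w1; rewrite big_ord0 => /eqP; rewrite eq_sym oner_eq0.
rewrite big_ord_recr /=; move: w1; rewrite big_ord_recr /= => w1.
set r := \sum_(i < m) w (widen_ord (leqnSn m) i) in w1 *.
have r0 : 0 <= r by apply: sumr_ge0 => i _; apply: w0.
have wl : w ord_max = 1 - r by rewrite -w1 addrC addrK.
have [rz|rnz] := eqVneq r 0.
  have z : forall i : 'I_m, w (widen_ord (leqnSn m) i) = 0.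
    by move=> i; apply: (psumr_eq0P (fun i _ => w0 _) rz).
  rewrite big1 ?add0r; last by move=> i _; rewrite z scale0r.
  by rewrite wl rz subr0 scale1r; apply: SC.
have := IH (fun i => p (widen_ord (leqnSn m) i)) (fun i => w (widen_ord (leqnSn m) i) / r).
move=> /(_ (fun i => Sp _)) /(_ (fun i => divr_ge0 (w0 _) r0)).
rewrite -mulr_suml -/r mulfV // => /(_ erefl) Cy.
have := cC _ _ r Cy (SC _ (Sp ord_max)) r0.
rewrite -wl -w1 lerDl w0 => /(_ erefl).
rewrite scaler_sumr; congr (C (_ + _)); apply: eq_bigr => i _.
by rewrite scalerA mulrCA mulfV // mulr1.
Qed.


Lemma lastcD (x y : V) : lastc (x + y) = lastc x + lastc y.
Proof. by rewrite /lastc mxE. Qed.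
Lemma lastcZ l (x : V) : lastc (l *: x) = l * lastc x.
Proof. by rewrite /lastc mxE. Qed.
Lemma lastc_ct t (x : V) : lastc (ct t x) = t.
Proof. by rewrite /lastc /ct mxE eqxx. Qed.

Lemma ctD s t (x y : V) : ct (s + t) (x + y) = ct s x + ct t y.
Proof. by apply/rowP => i; rewrite !mxE; case: ifP. Qed.

Lemma ct_conv t l (x y : V) : ct t (l *: x + (1 - l) *: y) = l *: ct t x + (1 - l) *: ct t y.
Proof.
apply/rowP => i; rewrite !mxE; case: ifP => // _.
by rewrite mulrBl mul1r addrC subrK.
Qed.

Lemma height_uniq S t t' : is_height S t -> is_height S t' -> t = t'.
Proof.
move=> [[x [Sx <-]] H] [[y [Sy <-]] H'].
by apply/eqP; rewrite eq_le H' // H.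
Qed.

Lemma bconv_ge t : bconv (fun x : V => t <= lastc x).
Proof.
move=> x y l hx hy l0 l1; rewrite lastcD !lastcZ.
have -> : t = l * t + (1 - l) * t by rewrite mulrBl mul1r addrC subrK.
by rewrite lerD // ler_wpM2l // subr_ge0.
Qed.

Lemma seq_min (s : seq V) : s != [::] ->
  exists2 x, x \in s & forall y, y \in s -> lastc x <= lastc y.
Proof.
elim: s => // a s IH _.
have [->|ne] := eqVneq s [::].
  by exists a; rewrite ?mem_seq1 // => y; rewrite mem_seq1 => /eqP ->.
have [b bs Hb] := IH ne.
have [ab|ba] := lerP (lastc a) (lastc b).
  exists a; first by rewrite mem_head.
  move=> y; rewrite in_cons => /orP [/eqP ->//|/Hb]; exact: le_trans.
exists b; first by rewrite in_cons bs orbT.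
move=> y; rewrite in_cons => /orP [/eqP ->|/Hb//]; exact: ltW.
Qed.

Lemma poly_height P : is_polytope P -> exists t, is_height P t.
Proof.
move=> [s [sne Ps]]; have [x xs Hx] := @seq_min s sne.
exists (lastc x); split.
  by exists x; split=> //; apply/Ps; apply: hull_sub.
move=> y /Ps; apply: (@hull_min _ (fun z => lastc x <= lastc z)); first exact: bconv_ge.
by move=> z; apply: Hx.
Qed.
Arguments poly_height {P}.


Lemma msum_height P Q tP tQ : is_height P tP -> is_height Q tQ ->
  is_height (msum P Q) (tP + tQ).
Proof.
move=> [[p [Pp <-]] HP] [[q [Qq <-]] HQ]; split.
  by exists (p + q); split; [exists p, q | rewrite lastcD].
by move=> _ [x [y [Px [Qy ->]]]]; rewrite lastcD lerD // ?HP ?HQ.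
Qed.
Arguments msum_height {P Q tP tQ}.


Lemma msum_bconv A B : bconv A -> bconv B -> bconv (msum A B).
Proof.
move=> cA cB _ _ l [a [b [Aa [Bb ->]]]] [a' [b' [Aa' [Bb' ->]]]] l0 l1.
exists (l *: a + (1 - l) *: a'), (l *: b + (1 - l) *: b'); split; first exact: cA.
split; first exact: cB.
by rewrite !scalerDr addrACA.
Qed.

Lemma Sh_char P t : is_height P t ->
  forall x, Sh P x <-> hull (punion P (pimage (ct t) P)) x.
Proof.
move=> Ht x; split; first by move=> [t' [Ht' H]]; rewrite (@height_uniq P t t' Ht Ht').
by move=> H; exists t.
Qed.
Arguments Sh_char {P t} Ht x.


Lemma mixed (p q : V) tP tQ : tP <= lastc p -> tQ <= lastc q ->
  exists l, [/\ 0 <= l, l <= 1 &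
    p + ct tQ q = l *: (p + q) + (1 - l) *: ct (tP + tQ) (p + q)].
Proof.
move=> hp hq; set a := lastc p - tP; set b := lastc q - tQ.
have a0 : 0 <= a by rewrite subr_ge0.
have b0 : 0 <= b by rewrite subr_ge0.
exists (a / (a + b)); split.
- by apply: divr_ge0 => //; apply: addr_ge0.
- have [z|nz] := eqVneq (a + b) 0; first by rewrite z invr0 mulr0.
  by rewrite ler_pdivrMr ?mul1r ?lerDl // lt_def nz addr_ge0.
have key : a / (a + b) * (a + b) = a.
  have [z|nz] := eqVneq (a + b) 0.
    have : (a == 0) && (b == 0) by rewrite -(paddr_eq0 a0 b0) z.
    by case/andP => /eqP az _; rewrite az !mul0r.
  by rewrite mulfVK.
apply/rowP => i; rewrite !mxE; case: ifP => [/eqP ->|_].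
  have : lastc p + tQ = (a / (a + b)) * (lastc p + lastc q) + (1 - a / (a + b)) * (tP + tQ).
    move: key; move: (a / (a + b)) => l key.
    rewrite (_ : lastc p + lastc q = (tP + tQ) + (a + b)); last by rewrite /a /b; ring.
    rewrite mulrDr key /a; ring.
  by rewrite /lastc.
by move: (a / (a + b)) => l; ring.
Qed.
Arguments mixed {p q tP tQ}.



Lemma Sh_bconv P t : is_height P t -> bconv (Sh P).
Proof.
move=> Ht x y l /(Sh_char Ht) hx /(Sh_char Ht) hy l0 l1.
by apply/(Sh_char Ht); apply: hull_bconv.
Qed.
Arguments Sh_bconv {P t}.


Lemma bconv_transl C (u : V) : bconv C -> bconv (fun y => C (u + y)).
Proof.
move=> cC x y l hx hy l0 l1.
have -> : u + (l *: x + (1 - l) *: y) = l *: (u + x) + (1 - l) *: (u + y).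
  by rewrite !scalerDr addrACA -scalerDl [l + _]addrC subrK scale1r.
exact: cC.
Qed.

Lemma part1 P Q tP tQ : is_height P tP -> is_height Q tQ ->
  set_eq (Sh (msum P Q)) (msum (Sh P) (Sh Q)).
Proof.
move=> HP HQ; have HPQ := msum_height HP HQ.
move=> z; split.
  move/(Sh_char HPQ); apply: hull_min.
    exact: msum_bconv (Sh_bconv HP) (Sh_bconv HQ).
  move=> w [[p [q [Pp [Qq ->]]]]|[_ [[p [q [Pp [Qq ->]]]] ->]]].
    exists p, q; split; first by apply/(Sh_char HP); apply: hull_sub; left.
    by split=> //; apply/(Sh_char HQ); apply: hull_sub; left.
  exists (ct tP p), (ct tQ q); rewrite ctD; split.
    by apply/(Sh_char HP); apply: hull_sub; right; exists p.
  by split=> //; apply/(Sh_char HQ); apply: hull_sub; right; exists q.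
move=> [x [y [/(Sh_char HP) hx [/(Sh_char HQ) hy ->]]]].
have cC := Sh_bconv HPQ.
have inC : forall w, punion (msum P Q) (pimage (ct (tP + tQ)) (msum P Q)) w ->
  Sh (msum P Q) w by move=> w hw; apply/(Sh_char HPQ); apply: hull_sub.
have lbP : forall p, P p -> tP <= lastc p by move=> p; case: HP => _; apply.
have lbQ : forall q, Q q -> tQ <= lastc q by move=> q; case: HQ => _; apply.
have A : forall u v, punion P (pimage (ct tP) P) u -> punion Q (pimage (ct tQ) Q) v ->
    Sh (msum P Q) (u + v).
  move=> u v [Pu|[p [Pp ->]]] [Qv|[q [Qq ->]]].
  - by apply: inC; left; exists u, v.
  - have [l [l0 l1 ->]] := mixed (lbP _ Pu) (lbQ _ Qq).
    by apply: cC => //; apply: inC; [left; exists u, q | right; exists (u + q); split=> //; exists u, q].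
  - have [l [l0 l1 e]] := mixed (lbQ _ Qv) (lbP _ Pp).
    rewrite addrC e [v + p]addrC [tQ + tP]addrC.
    by apply: cC => //; apply: inC; [left; exists p, v | right; exists (p + v); split=> //; exists p, v].
  - by rewrite -ctD; apply: inC; right; exists (p + q); split=> //; exists p, q.
have B : forall u, punion P (pimage (ct tP) P) u -> forall y, hull (punion Q (pimage (ct tQ) Q)) y ->
    Sh (msum P Q) (u + y).
  move=> u hu; apply: (@hull_min _ (fun y => Sh (msum P Q) (u + y))).
    exact: bconv_transl.
  by move=> v hv; apply: A.
have : forall x, hull (punion P (pimage (ct tP) P)) x -> Sh (msum P Q) (y + x).
  apply: hull_min; first exact: bconv_transl.
  by move=> u hu; rewrite addrC; apply: B.
by move/(_ x hx); rewrite addrC.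
Qed.
Arguments part1 {P Q tP tQ}.


Lemma part2 P : is_polytope P -> is_polytope (Sh P).
Proof.
move=> hP; have [t Ht] := poly_height hP; case: hP => [s [sne Ps]].
exists (s ++ map (ct t) s); split; first by move: sne; case: (s).
move=> z; split.
  move/(Sh_char Ht); apply: hull_min; first exact: hull_bconv.
  move=> w [/Ps|[x [/Ps Px ->]]].
    by apply: hull_mono => y ys; rewrite mem_cat ys.
  move: x Px; apply: (@hull_min _ (fun x => hull _ (ct t x))).
    move=> x y l hx hy l0 l1; rewrite ct_conv; exact: hull_bconv.
  by move=> y ys; apply: hull_sub; rewrite mem_cat map_f ?orbT.
move=> hz; apply/(Sh_char Ht); move: z hz; apply: hull_min; first exact: hull_bconv.
move=> y; rewrite mem_cat => /orP [ys|/mapP [x xs ->]]; apply: hull_sub.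
  by left; apply/Ps; apply: hull_sub.
by right; exists x; split=> //; apply/Ps; apply: hull_sub.
Qed.

Lemma Sh_ext1 A B x : set_eq A B -> Sh A x -> Sh B x.
Proof.
move=> AB [t [[[y [Ay yt]] Hl] hx]]; exists t; split.
  split; first by exists y; split=> //; apply/AB.
  by move=> z /AB; apply: Hl.
move: x hx; apply: hull_mono => w [/AB|[v [/AB Av ->]]]; [left|right] => //.
by exists v.
Qed.

End H.

Theorem lemma3p2 (R : realFieldType) (n : nat) :
  (* Sh(P+Q) = Sh(P) + Sh(Q) for polytopes P, Q *)
  (forall P Q : pset R n, is_polytope P -> is_polytope Q ->
     set_eq (Sh (msum P Q)) (msum (Sh P) (Sh Q)))
  /\
  (* Sh maps polytopes to polytopes *)
  (forall P : pset R n, is_polytope P -> is_polytope (Sh P))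
  /\
  (* well-definedness of the induced map [P]-[Q] |-> [Sh P]-[Sh Q] on the
     Grothendieck group: P+Q' = P'+Q implies Sh P + Sh Q' = Sh P' + Sh Q *)
  (forall P Q P' Q' : pset R n,
     is_polytope P -> is_polytope Q -> is_polytope P' -> is_polytope Q' ->
     set_eq (msum P Q') (msum P' Q) ->
     set_eq (msum (Sh P) (Sh Q')) (msum (Sh P') (Sh Q))).
Proof.
have p1 : forall P Q : pset R n, is_polytope P -> is_polytope Q ->
     set_eq (Sh (msum P Q)) (msum (Sh P) (Sh Q)).
  move=> P Q hP hQ; have [tP HP] := @poly_height R n P hP; have [tQ HQ] := @poly_height R n Q hQ.
  exact: (@part1 R n P Q tP tQ HP HQ).
split=> //; split; first exact: (@part2 R n).
move=> P Q P' Q' hP hQ hP' hQ' E x; split.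
  move/(p1 _ _ hP hQ') => h; apply/(p1 _ _ hP' hQ).
  exact: (@Sh_ext1 R n _ _ _ E h).
move/(p1 _ _ hP' hQ) => h; apply/(p1 _ _ hP hQ').
by apply: (@Sh_ext1 R n _ _ _ _ h) => y; split => /E.
Qed.
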